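(* Let $G$ be a finite connected graph containing two distinct cycles, and suppose $\mathrm{cat}(G)=3$. Then $|V(G)|=6$ and $G$ consists of two vertex-disjoint triangles together with a single edge joining a vertex of one triangle to a vertex of the other.
   Context: Cat Herding is played on a simple graph $G$. The cat first places its token on a vertex. Then the players alternate, the herder moving first: the herder deletes one edge of the current graph, and then, unless the cat's current vertex has degree $0$ in the current graph, the cat moves its token along a path with at least one edge in the current graph to a different vertex. The cat is captured when its vertex has degree $0$ in the current graph, and the game ends; the score is the number of edges deleted. For a finite graph $G$ and $v\in V(G)$, $\mathrm{cat}(G,v)$ is the score under optimal play (herder minimizing, cat maximizing) when the cat starts at $v$, and $\mathrm{cat}(G)=\max_{v}\mathrm{cat}(G,v)$. *)

(* Defs.v *)
From mathcomp Require Import all_boot.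
Set Implicit Arguments. Unset Strict Implicit. Unset Printing Implicit Defensive.

Section CatHerding.
Variable T : finType.

Definition simple_graph (adj : rel T) : Prop :=
  symmetric adj /\ irreflexive adj.

Definition edges (adj : rel T) : {set {set T}} :=
  [set E : {set T} | [exists x, exists y, adj x y && (E == [set x; y])]].

(* The current graph is given by its remaining edge set E (2-sets). *)
Definition deg (E : {set {set T}}) (v : T) : nat := #|[set f in E | v \in f]|.

Definition eadj (E : {set {set T}}) : rel T := fun x y => [set x; y] \in E.

Definition cat_move (E : {set {set T}}) (v w : T) : bool :=
  connect (eadj E) v w && (w != v).

(* catval n E v: value of the game (herder minimizing, cat maximizing
   the number of edges deleted from now on) when the current edge set is E,
   the cat sits at v and it is the herder's turn; n is fuel (n >= #|E|). *)
Fixpoint catval (n : nat) (E : {set {set T}}) (v : T) : nat :=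
  match n with
  | 0 => 0
  | n'.+1 =>
    if deg E v == 0 then 0 else
    \big[minn/#|E|]_(f in E)
       (1 + (if deg (E :\ f) v == 0 then 0
             else \max_(w | cat_move (E :\ f) v w) catval n' (E :\ f) w))
  end.

Definition cat_at (adj : rel T) (v : T) : nat :=
  catval #|edges adj| (edges adj) v.

Definition cat_number (adj : rel T) : nat := \max_(v : T) cat_at adj v.

Definition connected_graph (adj : rel T) : Prop :=
  (0 < #|T|) /\ forall x y, connect adj x y.

(* A cycle: a duplicate-free cyclic vertex sequence of length >= 3 whose
   consecutive vertices are adjacent; identified with its edge set. *)
Definition cycle_edges (p : seq T) : {set {set T}} :=
  [set [set x; y] | x in p, y in p & y == next p x].

Definition is_cycle (adj : rel T) (p : seq T) : Prop :=
  [/\ 3 <= size p, uniq p & cycle adj p].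

Definition two_distinct_cycles (adj : rel T) : Prop :=
  exists p q, [/\ is_cycle adj p, is_cycle adj q & cycle_edges p != cycle_edges q].

End CatHerding.

(* Main.v *)
Require Import Defs.
From mathcomp Require Import all_boot.
From Stdlib Require Import Classical.
Set Implicit Arguments. Unset Strict Implicit. Unset Printing Implicit Defensive.

Section Game.
Variable T : finType.

Lemma set2_eqP (x y z t : T) : [set x; y] = [set z; t] ->
  (x = z /\ y = t) \/ (x = t /\ y = z).
Proof.
move=> E.
have /set2P hx : x \in [set z; t] by rewrite -E set21.
have /set2P hy : y \in [set z; t] by rewrite -E set22.
have /set2P hz : z \in [set x; y] by rewrite E set21.
have /set2P ht : t \in [set x; y] by rewrite E set22.
case: hx hy hz ht => e1 [] e2 [] e3 [] e4; subst; auto.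
Qed.

Lemma catval_le_card n (E : {set {set T}}) v : catval n E v <= #|E|.
Proof.
case: n => [|n] //=. case: ifP => // _.
elim/big_rec: _ => // i x _ hx. exact: leq_trans (geq_minr _ _) hx.
Qed.

Lemma deg_edge (X : {set {set T}}) v w : eadj X v w -> deg X v != 0.
Proof.
rewrite /deg -lt0n => h; apply/card_gt0P; exists [set v; w].
by rewrite inE; apply/andP; split => //; rewrite !inE eqxx.
Qed.

Lemma move_deg (X : {set {set T}}) v w : connect (eadj X) v w -> w != v -> deg X v != 0.
Proof.
case/connectP => s; case: s => [|s1 s] /=.
  by move=> _ ->; rewrite eqxx.
by case/andP => h _ _ _; exact: deg_edge h.
Qed.

Lemma deg_mem (E : {set {set T}}) v : deg E v != 0 -> exists f, f \in E.
Proof.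
rewrite /deg -lt0n => /card_gt0P [f]; rewrite inE => /andP[? _]; by exists f.
Qed.

Lemma catval_ge1 (E : {set {set T}}) v : deg E v != 0 -> 0 < catval #|E| E v.
Proof.
move=> hd; have [f hf] := deg_mem hd.
have := cardsD1 f E; rewrite hf add1n => hE.
rewrite [in catval _ _ _]hE /= (negbTE hd).
elim/big_rec: _ => [|i x _ hx]; first by rewrite hE.
by rewrite leq_min hx add1n ltnS leq0n.
Qed.

Lemma catval_ge k (E : {set {set T}}) v : deg E v != 0 ->
  (forall f, f \in E -> exists w, cat_move (E :\ f) v w /\ k <= catval #|E :\ f| (E :\ f) w) ->
  k.+1 <= catval #|E| E v.
Proof.
move=> hd H; have [f0 hf0] := deg_mem hd.
have := cardsD1 f0 E; rewrite hf0 add1n => hE.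
rewrite [in catval _ _ _]hE /= (negbTE hd).
elim/big_rec: _ => [|f x hf hx].
  have [w0 [_ h0]] := H f0 hf0.
  by rewrite hE ltnS (leq_trans h0 (catval_le_card _ _ _)).
rewrite leq_min hx andbT.
have [w [hm hk]] := H f hf.
have hd' : deg (E :\ f) v != 0 by move/andP: hm => [c ne]; exact: move_deg c ne.
rewrite (negbTE hd') add1n ltnS.
have -> : #|E :\ f0| = #|E :\ f|.
  by have := cardsD1 f E; rewrite hf add1n hE => -[].
exact: leq_trans hk (leq_bigmax_cond w hm).
Qed.

Lemma catval_le k (E : {set {set T}}) v : deg E v != 0 -> catval #|E| E v <= k.+1 ->
  exists2 f, f \in E & forall w, cat_move (E :\ f) v w -> catval #|E :\ f| (E :\ f) w <= k.
Proof.
move=> hd hle; apply: NNPP => hn.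
have : k.+2 <= catval #|E| E v.
  apply: catval_ge => // f hf; apply: NNPP => hw; apply: hn; exists f => // w hm.
  rewrite leqNgt; apply/negP => hlt; apply: hw; exists w; split => //.
by rewrite ltnNge hle.
Qed.

Lemma eadjD (X : {set {set T}}) g x y : eadj (X :\ g) x y = ([set x; y] != g) && eadj X x y.
Proof. by rewrite /eadj in_setD1. Qed.

Lemma eadj_sym (X : {set {set T}}) : symmetric (eadj X).
Proof. by move=> x y; rewrite /eadj setUC. Qed.

Lemma set2_neq (x y z : T) : y != z -> [set x; y] != [set x; z].
Proof.
move=> ne; apply/eqP => /set2_eqP [[_ e]|[e1 e2]]; first by rewrite e eqxx in ne.
by subst; rewrite eqxx in ne.
Qed.

Lemma two_ge (Y : {set {set T}}) u t1 t2 : eadj Y u t1 -> eadj Y u t2 ->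
  t1 != t2 -> u != t1 -> u != t2 -> 2 <= catval #|Y| Y u.
Proof.
move=> h1 h2 ne n1 n2; apply: catval_ge; first exact: deg_edge h1.
move=> h hh.
have step : forall t, eadj Y u t -> [set u; t] != h -> u != t ->
   exists w, cat_move (Y :\ h) u w /\ 0 < catval #|Y :\ h| (Y :\ h) w.
  move=> t ht nh nt; exists t; split.
    by rewrite /cat_move connect1 ?eadjD ?nh // eq_sym nt.
  apply: catval_ge1; apply: (@deg_edge _ _ u).
  by rewrite eadj_sym eadjD nh.
case: (eqVneq h [set u; t1]) => eh.
  apply: step h2 _ n2; rewrite eh eq_sym; exact: set2_neq.
by apply: step h1 _ n1; rewrite eq_sym.
Qed.

Definition DF (X : {set {set T}}) (w : T) : Prop :=
  exists a b c d, [/\ eadj X w b, eadj X w c, eadj X b a, eadj X c d &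
   [/\ b != c, a != w, d != w, w != b & [/\ w != c, a != b, c != d &
     [set a; b] != [set c; d]]]].

Lemma DF_ge X w : DF X w -> 3 <= catval #|X| X w.
Proof.
case=> a [b [c [d [hb hc hba hcd [nbc naw ndw nwb [nwc nab ncd nS]]]]]].
apply: catval_ge; first exact: deg_edge hb.
move=> g hg.
have neq2 : forall (x y z t : T), [set x; y] = [set z; t] -> ((x == z) && (y == t)) || ((x == t) && (y == z)).
  by move=> x y z t /set2_eqP [[-> ->]|[-> ->]]; rewrite !eqxx ?orbT.
case: (boolP ((g != [set w; c]) && (g != [set c; d]))) => hgc.
  case/andP: hgc => g1 g2; exists c; split.
    by rewrite /cat_move connect1 ?eadjD ?hc 1?eq_sym ?g1 // eq_sym.
  apply: (@two_ge (X :\ g) c w d).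
  - by rewrite eadjD [eadj X c w]eadj_sym hc setUC eq_sym g1.
  - by rewrite eadjD hcd eq_sym g2.
  - by rewrite eq_sym.
  - by rewrite eq_sym.
  - exact: ncd.
have hg1 : [set w; b] != g.
  apply/eqP => e; rewrite -e in hgc; move: hgc; rewrite negb_and !negbK.
  by case/orP => /eqP /neq2; rewrite ?(negbTE nbc) ?(negbTE nwc) ?(negbTE nwb) ?andbF ?andFb ?(eq_sym w d) ?(negbTE ndw) ?andbF.
have hg2 : [set b; a] != g.
  apply/eqP => e; rewrite -e in hgc; move: hgc; rewrite negb_and !negbK.
  case/orP => /eqP E.
    by move/neq2: E; rewrite (eq_sym b w) (negbTE nwb) (negbTE nbc) andFb.
  by move: nS; rewrite setUC E eqxx.
exists b; split.
  by rewrite /cat_move connect1 ?eadjD ?hb ?hg1 // eq_sym.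
apply: (@two_ge (X :\ g) b w a).
- by rewrite eadjD [eadj X b w]eadj_sym hb setUC hg1.
- by rewrite eadjD hba hg2.
- by rewrite eq_sym.
- by rewrite eq_sym.
- by rewrite eq_sym.
Qed.

End Game.
Section Cyc.
Variable T : finType.

Lemma cedgeP (r : seq T) h :
  reflect (exists2 x, x \in r & h = [set x; next r x]) (h \in cycle_edges r).
Proof.
apply: (iffP imset2P) => [[x y hx hy ->]|[x hx ->]].
  by exists x => //; move: hy; rewrite inE => /andP[_ /eqP ->].
by exists x (next r x) => //; rewrite inE mem_next hx eqxx.
Qed.

Lemma cedge_mem (r : seq T) h z : h \in cycle_edges r -> z \in h -> z \in r.
Proof. by case/cedgeP => x hx -> /set2P [->|->] //; rewrite mem_next. Qed.

Definition CE (r : seq T) (h : {set T}) : rel T :=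
  fun a b => ([set a; b] \in cycle_edges r) && ([set a; b] != h).

Lemma CE_sym r h : symmetric (CE r h).
Proof. by move=> a b; rewrite /CE setUC. Qed.

Lemma set2_eqP' (x y z t : T) : [set x; y] = [set z; t] ->
  (x = z /\ y = t) \/ (x = t /\ y = z).
Proof.
move=> E.
have /set2P hx : x \in [set z; t] by rewrite -E set21.
have /set2P hy : y \in [set z; t] by rewrite -E set22.
have /set2P hz : z \in [set x; y] by rewrite E set21.
have /set2P ht : t \in [set x; y] by rewrite E set22.
case: hx hy hz ht => e1 [] e2 [] e3 [] e4; subst; auto.
Qed.

Lemma cyc_conn (r : seq T) h : 3 <= size r -> uniq r -> h \in cycle_edges r ->
  {in r &, forall x1 x2, connect (CE r h) x1 x2}.
Proof.
move=> hs hu /cedgeP [x hx eh].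
set y := next r x.
have hy : y \in r by rewrite mem_next.
case: (rot_to hy) => i s hr.
have hu' : uniq (y :: s) by rewrite -hr rot_uniq.
have hsz : size (y :: s) = size r by rewrite -hr size_rot.
have hmem : forall z, (z \in y :: s) = (z \in r) by move=> z; rewrite -hr mem_rot.
have hnx : forall z, next r z = next (y :: s) z by move=> z; rewrite -hr next_rot.
have ninj : forall a b, a < size (y :: s) -> b < size (y :: s) ->
    nth y (y :: s) a = nth y (y :: s) b -> a = b.
  by move=> a b ha hb /eqP; rewrite nth_uniq // => /eqP.
have nxt : forall j, j < size s -> next r (nth y (y :: s) j) = nth y (y :: s) j.+1.
  move=> j hj; rewrite hnx next_nth mem_nth; last by rewrite /= ltnS ltnW.
  by rewrite index_uniq // /= ltnS ltnW.
have hpath : path (CE r h) y s.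
  apply/(pathP y) => j hj; rewrite /CE.
  have e1 : nth y s j = nth y (y :: s) j.+1 by [].
  have hj1 : j < size (y :: s) by rewrite /= ltnS ltnW.
  have hj2 : j.+1 < size (y :: s) by rewrite /= ltnS.
  apply/andP; split.
    apply/cedgeP; exists (nth y (y :: s) j); first by rewrite -hmem mem_nth.
    by rewrite nxt.
  rewrite eh; apply/eqP => /set2_eqP' [[a1 a2]|[a1 a2]].
    by move: a2; rewrite e1 -/y => /(ninj _ 0 hj2 (isT : 0 < size (y :: s))).
  have j0 : j = 0 by apply: (ninj _ 0 hj1 (isT : 0 < size (y :: s))).
  subst j.
  have h1 : 1 < size s by move: hs; rewrite -hsz.
  have := nxt 1 h1; rewrite -e1 a2 -/y => E.
  have h2 : 2 < size (y :: s) by rewrite /= ltnS.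
  by have := ninj 2 0 h2 (isT : 0 < size (y :: s)) (esym E).
have hc : forall z, z \in r -> connect (CE r h) y z.
  move=> z hz; have hz2 : z \in y :: s by rewrite hmem.
  exact: (path_connect hpath hz2).
move=> x1 x2 h1 h2.
apply: connect_trans (hc _ h2).
by rewrite (sym_connect_sym (@CE_sym r h)) hc.
Qed.

End Cyc.
Section Graph.
Variable T : finType.
Variable adj : rel T.
Hypothesis Hsym : symmetric adj.
Hypothesis Hirr : irreflexive adj.

Local Notation E0 := (edges adj).
Definition R (f : {set T}) := eadj (E0 :\ f).
Definition NoDF f v := forall w, w != v -> connect (R f) v w -> ~ DF (E0 :\ f) w.

Lemma memE0 x y : ([set x; y] \in E0) = adj x y.
Proof.
rewrite /edges inE; apply/existsP/idP => [[a /existsP [b /andP [h /eqP E]]]|h].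
  by case: (set2_eqP E) => -[-> ->] //; rewrite Hsym.
by exists x; apply/existsP; exists y; rewrite h eqxx.
Qed.

Lemma R_E f x y : R f x y = adj x y && ([set x; y] != f).
Proof. by rewrite /R eadjD /eadj memE0 andbC. Qed.

Lemma R_sym f : symmetric (R f).
Proof. exact: eadj_sym. Qed.

Lemma adj_neq x y : adj x y -> x != y.
Proof. by apply: contraTneq => ->; rewrite Hirr. Qed.

Lemma R_neq f x y : R f x y -> x != y.
Proof. by rewrite R_E => /andP [/adj_neq]. Qed.

Lemma cedge_E0 r h : cycle adj r -> h \in cycle_edges r -> h \in E0.
Proof. by move=> hc /cedgeP [x hx ->]; rewrite memE0; exact: next_cycle hc hx. Qed.

Lemma cyc_sub f r : uniq r -> cycle adj r -> f \notin cycle_edges r -> cycle (R f) r.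
Proof.
move=> hu hc hf. apply: (@cycle_from_next _ (R f) r hu) => x hx.
rewrite R_E (next_cycle hc hx) /=; apply: contraNneq hf => <-.
by apply/cedgeP; exists x.
Qed.

Lemma conn_Rf f r : 3 <= size r -> uniq r -> cycle adj r -> f \in cycle_edges r ->
  (forall x y, connect adj x y) -> forall x y, connect (R f) x y.
Proof.
move=> hs hu hc hf Hc x y.
apply: (connect_sub _ (Hc x y)) => a b hab.
case: (eqVneq [set a; b] f) => e.
  have ha : a \in r by apply: (cedge_mem hf); rewrite -e set21.
  have hb : b \in r by apply: (cedge_mem hf); rewrite -e set22.
  apply: (connect_sub _ (cyc_conn hs hu hf ha hb)) => u w /andP [h1 h2].
  by apply: connect1; rewrite R_E h2 andbT -memE0; exact: cedge_E0 hc h1.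
by apply: connect1; rewrite R_E hab e.
Qed.

Lemma exit (e : rel T) (A : pred T) x y : connect e x y -> A x -> ~~ A y ->
  exists a b, [/\ A a, ~~ A b & e a b].
Proof.
case/connectP => s; elim: s x => [|z s IH] x /=.
  by move=> _ -> hx; rewrite hx.
case/andP => hxz hp hl hx hy.
case: (boolP (A z)) => hz; first exact: IH hp hl hz hy.
by exists x, z.
Qed.

Lemma set2_notin (x y z t : T) : x \in [set x; y] -> x != z -> x != t -> [set x; y] != [set z; t].
Proof.
move=> _ n1 n2; apply/eqP => E.
have : x \in [set z; t] by rewrite -E set21.
by rewrite !inE (negbTE n1) (negbTE n2).
Qed.

Lemma K4 f v r : NoDF f v -> uniq r -> cycle (R f) r ->
  (forall z, z \in r -> connect (R f) v z) -> 4 <= size r -> False.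
Proof.
case: r => [|x0 [|x1 [|x2 [|x3 rest]]]] // hn hu hc hcon _.
move: hc => /= /andP [h01 /andP [h12 /andP [h23]]]; rewrite rcons_path => /andP [hp hl].
move: hu; rewrite /= !inE => /andP[/norP[n01 /norP[n02 /norP[n03 n0r]]]
   /andP[/norP[n12 /norP[n13 n1r]] /andP[/norP[n23 n2r] /andP[n3r ur]]]].
have [dd [hdd nd1 nd2 nd3]] : exists dd, [/\ R f x3 dd, dd != x1, dd != x2 & dd != x3].
  move: hp hl n0r n1r n2r n3r; destruct rest as [|y rest'] => /= hp hl.
    by move=> *; exists x0; split.
  rewrite !inE => /norP [n0y _] /norP [n1y _] /norP [n2y _] /norP [n3y _].
  case/andP: hp => h3y _; exists y; split; rewrite // eq_sym //.
set z := last x3 rest in hl.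
have hz : z \in x3 :: rest by exact: mem_last.
have nz1 : z != x1 by apply: contraTneq hz => ->; rewrite inE negb_or n13 n1r.
have nz2 : z != x2 by apply: contraTneq hz => ->; rewrite inE negb_or n23 n2r.
have nz0 : z != x0 by apply: contraTneq hz => ->; rewrite inE negb_or n03 n0r.
case: (eqVneq x1 v) => e1.
  apply: (hn x2); first by rewrite -e1 eq_sym.
    by apply: hcon; rewrite !inE eqxx !orbT.
  exists x0, x1, x3, dd; split.
  - by rewrite eadj_sym.
  - exact: h23.
  - by rewrite eadj_sym.
  - exact: hdd.
  split; first exact: n13.
  - exact: n02.
  - exact: nd2.
  - by rewrite eq_sym.
  split; first exact: n23.
  - exact: n01.
  - by rewrite eq_sym.
  - by rewrite setUC; apply: set2_notin; rewrite ?set21 // eq_sym.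
apply: (hn x1) => //; first by apply: hcon; rewrite !inE eqxx !orbT.
exists z, x0, x2, x3; split.
- by rewrite eadj_sym.
- exact: h12.
- by rewrite eadj_sym.
- exact: h23.
split; first exact: n02.
- exact: nz1.
- by rewrite eq_sym.
- by rewrite eq_sym.
split; first exact: n12.
- exact: nz0.
- exact: n23.
- by rewrite setUC; apply: set2_notin; rewrite ?set21.
Qed.


Lemma K3 f v a b c y : NoDF f v -> R f a b -> R f b c -> R f c a ->
  uniq [:: a; b; c] -> connect (R f) v b -> connect (R f) v c ->
  R f a y -> y \notin [:: a; b; c] -> False.
Proof.
move=> hn hab hbc hca hu cb cc hay hy.
have nab : a != b by apply: contraTneq hu => ->; rewrite /= !inE eqxx.
have nac : a != c by apply: contraTneq hu => ->; rewrite /= !inE eqxx orbT.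
have nbc : b != c by apply: contraTneq hu => ->; rewrite /= !inE eqxx ?orbT ?andbF.
have nya : y != a by apply: contraNneq hy => ->; rewrite !inE eqxx.
have nyb : y != b by apply: contraNneq hy => ->; rewrite !inE eqxx ?orbT.
have nyc : y != c by apply: contraNneq hy => ->; rewrite !inE eqxx ?orbT.
case: (eqVneq b v) => eb.
  apply: (hn c) => //; first by rewrite -eb eq_sym.
  exists y, a, b, a; split.
  - exact: hca.
  - by rewrite eadj_sym.
  - exact: hay.
  - by rewrite eadj_sym.
  split; first exact: nab.
  - exact: nyc.
  - exact: nac.
  - by rewrite eq_sym.
  split; first by rewrite eq_sym.
  - exact: nya.
  - by rewrite eq_sym.
  - by apply: set2_notin; rewrite ?set21.
apply: (hn b) => //.
exists y, a, c, a; split.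
- by rewrite eadj_sym.
- exact: hbc.
- exact: hay.
- exact: hca.
split; first exact: nac.
- exact: nyb.
- exact: nab.
- by rewrite eq_sym.
split; first exact: nbc.
- exact: nya.
- by rewrite eq_sym.
- by apply: set2_notin; rewrite ?set21.
Qed.

Lemma K f v r : NoDF f v -> 3 <= size r -> uniq r -> cycle (R f) r ->
  (exists2 x, x \in r & connect (R f) v x) ->
  size r = 3 /\ (forall y, connect (R f) v y -> y \in r).
Proof.
move=> hn hs hu hc [x hx hvx].
have csym := sym_connect_sym (@R_sym f).
have hall : forall z, z \in r -> connect (R f) v z.
  case: r hs hu hc hx => [//|x0 s] _ _ hc hx z hz.
  move: hc; rewrite /= rcons_path => /andP [hp _].
  apply: connect_trans hvx _; apply: (@connect_trans _ _ x0).
    by rewrite csym; exact: (path_connect hp hx).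
  exact: (path_connect hp hz).
have h3 : size r = 3.
  apply/eqP; rewrite eqn_leq hs andbT leqNgt; apply/negP => h4.
  exact: K4 hn hu hc hall h4.
split => // y hy; apply: NNPP => hny; move/negP: hny => hny.
have hxy : connect (R f) x y by apply: connect_trans _ hy; rewrite csym.
have [a [b [ha hb hab]]] := exit (A := mem r) hxy hx hny.
case: r hs hu hc hx hvx hall hny h3 ha hb => [|x0 [|x1 [|x2 [|? ?]]]] // _ hu hc _ _ hall _ _ ha hb.
move: hc => /= /andP [h01 /andP [h12 /andP [h20 _]]].
have u1 : uniq [:: x1; x2; x0] by move: hu; rewrite -(rot_uniq 1).
have u2 : uniq [:: x2; x0; x1] by move: hu; rewrite -(rot_uniq 2).
have m1 : b \notin [:: x1; x2; x0] by move: hb; rewrite !inE; case: (b == x0); case: (b == x1); case: (b == x2).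
have m2 : b \notin [:: x2; x0; x1] by move: hb; rewrite !inE; case: (b == x0); case: (b == x1); case: (b == x2).
move: ha; rewrite !inE => /or3P [] /eqP ea; subst a.
- by apply: (K3 hn h01 h12 h20 hu _ _ hab hb); apply: hall; rewrite !inE eqxx ?orbT.
- by apply: (K3 hn h12 h20 h01 u1 _ _ hab m1); apply: hall; rewrite !inE eqxx ?orbT.
- by apply: (K3 hn h20 h01 h12 u2 _ _ hab m2); apply: hall; rewrite !inE eqxx ?orbT.
Qed.

Lemma cyc_all (e : rel T) r : symmetric e -> cycle e r -> {in r &, forall x y, connect e x y}.
Proof.
case: r => [//|x0 s] hsym hc x y hx hy.
move: hc; rewrite /= rcons_path => /andP [hp _].
apply: (@connect_trans _ _ x0); last exact: (path_connect hp hy).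
by rewrite (sym_connect_sym hsym); exact: (path_connect hp hx).
Qed.

Lemma ce3P (a b c : T) h : uniq [:: a; b; c] ->
  (h \in cycle_edges [:: a; b; c]) =
  [exists x, [exists y, [&& x \in [:: a; b; c], y \in [:: a; b; c], x != y & h == [set x; y]]]].
Proof.
move=> hu.
have nab : a != b by apply: contraTneq hu => ->; rewrite /= !inE eqxx.
have nac : a != c by apply: contraTneq hu => ->; rewrite /= !inE eqxx orbT.
have nbc : b != c by apply: contraTneq hu => ->; rewrite /= !inE eqxx ?orbT ?andbF.
have na : next [:: a; b; c] a = b by rewrite /= eqxx.
have nb : next [:: a; b; c] b = c by rewrite /= eq_sym (negbTE nab) eqxx.
have nc : next [:: a; b; c] c = a by rewrite /= eq_sym (negbTE nac) eq_sym (negbTE nbc) eqxx.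
apply/cedgeP/existsP => [[x hx ->]|[x /existsP [y /and4P [hx hy nxy /eqP ->]]]].
  exists x; apply/existsP; exists (next [:: a; b; c] x).
  rewrite hx mem_next hx eqxx andbT.
  by move: hx; rewrite !inE => /or3P [] /eqP ->; rewrite ?na ?nb ?nc // eq_sym.
move: hx hy nxy; rewrite !inE => /or3P [] /eqP -> /or3P [] /eqP ->; rewrite ?eqxx // => _.
- by exists a; rewrite ?inE ?eqxx // na.
- by exists c; rewrite ?inE ?eqxx ?orbT // nc setUC.
- by exists a; rewrite ?inE ?eqxx // na setUC.
- by exists b; rewrite ?inE ?eqxx ?orbT // nb.
- by exists c; rewrite ?inE ?eqxx ?orbT // nc.
- by exists b; rewrite ?inE ?eqxx ?orbT // nb setUC.
Qed.

Lemma tri_eq (a b c : T) s : uniq [:: a; b; c] -> uniq s -> 3 <= size s ->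
  {subset s <= [:: a; b; c]} -> cycle_edges s = cycle_edges [:: a; b; c].
Proof.
move=> hu hus hs sub.
have hle := uniq_leq_size hus sub.
have [_ hmem] := uniq_min_size hus sub hs.
case: s hus hs sub hle hmem => [|a' [|b' [|c' [|? ?]]]] // hus _ _ _ hmem.
apply/setP => h; rewrite !ce3P //.
by apply/existsP/existsP => -[x /existsP [y H]]; exists x; apply/existsP; exists y;
  move: H; rewrite ?hmem.
Qed.

Lemma tri_adj (a b c : T) x y : uniq [:: a; b; c] -> cycle adj [:: a; b; c] ->
  x \in [:: a; b; c] -> y \in [:: a; b; c] -> x != y -> adj x y.
Proof.
move=> hu hc hx hy nxy; rewrite -memE0; apply: (cedge_E0 hc).
by rewrite ce3P //; apply/existsP; exists x; apply/existsP; exists y; rewrite hx hy nxy eqxx.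
Qed.

Lemma two_tri (r p q : seq T) : uniq r -> size r = 3 -> {subset p <= r} -> {subset q <= r} ->
  uniq p -> 3 <= size p -> uniq q -> 3 <= size q -> cycle_edges p = cycle_edges q.
Proof.
case: r => [|a [|b [|c [|? ?]]]] // hu _ sp sq hup hsp huq hsq.
by rewrite (tri_eq hu hup hsp sp) (tri_eq hu huq hsq sq).
Qed.

Lemma theta f g (p q : seq T) : 3 <= size p -> uniq p -> cycle adj p -> 3 <= size q -> uniq q -> cycle adj q ->
  f \in cycle_edges p -> f \in cycle_edges q -> g \in cycle_edges p -> g \notin cycle_edges q ->
  exists r, [/\ 3 <= size r, uniq r & cycle (R f) r].
Proof.
move=> hsp hup hcp hsq huq hcq fp fq gp gq.
have gf : g != f by apply: contraNneq gq => ->.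
case/cedgeP: (gp) => c hc eg.
set d := next p c in eg.
have hd : d \in p by rewrite mem_next.
have hcd : adj c d := next_cycle hcp hc.
have ncd := adj_neq hcd.
pose R2 := eadj (E0 :\ f :\ g).
have step : forall u w, [set u; w] \in E0 -> [set u; w] != f -> [set u; w] != g -> R2 u w.
  by move=> u w h1 h2 h3; rewrite /R2 !eadjD h3 h2 /eadj h1.
have conn : connect R2 c d.
  apply: (connect_sub _ (cyc_conn hsp hup gp hc hd)) => a b /andP [h1 h2].
  case: (eqVneq [set a; b] f) => e.
    have ha : a \in q by apply: (cedge_mem fq); rewrite -e set21.
    have hb : b \in q by apply: (cedge_mem fq); rewrite -e set22.
    apply: (connect_sub _ (cyc_conn hsq huq fq ha hb)) => u w /andP [k1 k2].
    apply: connect1; apply: step => //; first exact: cedge_E0 hcq k1.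
    by apply: contraNneq gq => <-.
  by apply: connect1; apply: step => //; exact: cedge_E0 hcp h1.
case/connectP: conn => s hs hl.
move: hl; case: (shortenP hs) => s' hs' hu' _ hl.
exists (c :: s'); split => //.
  case: s' hs' hu' hl => [|z [|z2 s'']] //=.
    by move=> _ _ e; rewrite e eqxx in ncd.
  move=> /andP [hz _] _ e; subst z.
  by move: hz; rewrite /R2 eadjD -eg eqxx.
rewrite /= rcons_path; apply/andP; split.
  by apply: sub_path hs' => u w; rewrite /R2 eadjD => /andP [].
by rewrite -hl R_E Hsym hcd setUC -eg gf.
Qed.

Lemma TriP (p q : seq T) : (forall x y, connect adj x y) -> (forall v, exists2 f, f \in E0 & NoDF f v) ->
  3 <= size p -> uniq p -> cycle adj p -> 3 <= size q -> uniq q -> cycle adj q ->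
  cycle_edges p != cycle_edges q ->
  exists a b, [/\ size p = 3, a \in p, b \notin p, adj a b &
    forall a' b', a' \in p -> b' \notin p -> adj a' b' -> [set a'; b'] = [set a; b]].
Proof.
move=> Hc NDF hsp hup hcp hsq huq hcq ne.
have T3 : forall r, uniq r -> size r = 3 -> {subset p <= r} -> {subset q <= r} -> False.
  by move=> r hu hs sp sq; move/eqP: ne; apply; exact: two_tri hu hs sp sq hup hsp huq hsq.
have hne : forall r : seq T, 3 <= size r -> exists x, x \in r.
  by case=> [//|x ?] _; exists x; rewrite inE eqxx.
have [x0 hx0] := hne p hsp.
have [f hf hn] := NDF x0.
case: (boolP (f \in cycle_edges p)) => hfp.
  have hconn := conn_Rf hsp hup hcp hfp Hc.
  have Kall : forall r, 3 <= size r -> uniq r -> cycle (R f) r -> False.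
    move=> r hs hu hc; have [y hy] := hne r hs.
    have [h3 hin] := K hn hs hu hc (ex_intro2 _ _ y hy (hconn x0 y)).
    by apply: (T3 r hu h3) => z _; apply: hin; exact: hconn.
  case: (boolP (f \in cycle_edges q)) => hfq.
    have [g] : exists g, (g \in cycle_edges p) && (g \notin cycle_edges q) ||
                         (g \in cycle_edges q) && (g \notin cycle_edges p).
      move: ne; rewrite eqEsubset negb_and => /orP [] /subsetPn [g h1 h2];
        by exists g; rewrite h1 h2 ?orbT.
    case/orP => /andP [g1 g2].
      have [r [hs hu hc]] := theta hsp hup hcp hsq huq hcq hfp hfq g1 g2.
      by case: (Kall r hs hu hc).
    have [r [hs hu hc]] := theta hsq huq hcq hsp hup hcp hfq hfp g1 g2.
    by case: (Kall r hs hu hc).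
  by case: (Kall _ hsq huq (cyc_sub huq hcq hfq)).
have hcp' := cyc_sub hup hcp hfp.
have [h3 hin] := K hn hsp hup hcp' (ex_intro2 _ _ x0 hx0 (connect0 _ _)).
have hall : forall z, z \in p -> connect (R f) x0 z.
  by move=> z hz; apply: (cyc_all (@R_sym f) hcp').
have [y hy] : exists y, y \notin p.
  apply: NNPP => H; apply: (T3 p hup h3 (fun z h => h)) => z _.
  by apply: NNPP => hz; apply: H; exists z; apply/negP.
have [a [b [ha hb hab]]] := exit (A := mem p) (Hc x0 y) hx0 hy.
have uniqE : forall a' b', a' \in p -> b' \notin p -> adj a' b' -> [set a'; b'] = f.
  move=> a' b' ha' hb' h; apply/eqP; apply: NNPP => hne'.
  move/negP: hb'; apply; apply: hin.
  apply: (connect_trans (hall a' ha')); apply: connect1.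
  by rewrite R_E h; apply/negP.
exists a, b; split => // a' b' ha' hb' h.
by rewrite (uniqE a b ha hb hab); exact: uniqE.
Qed.

Lemma uniq3 (x y z : T) : uniq [:: x; y; z] -> [/\ x != y, x != z & y != z].
Proof.
move=> hu; split; apply: contraTneq hu => ->; by rewrite /= !inE eqxx ?orbT ?andbF.
Qed.

Lemma tadj (r : seq T) x y : size r = 3 -> uniq r -> cycle adj r -> x \in r -> y \in r -> x != y -> adj x y.
Proof. by case: r => [|r0 [|r1 [|r2 [|? ?]]]] // _; exact: tri_adj. Qed.

Lemma third (r : seq T) x y : size r = 3 -> uniq r -> x \in r -> y \in r -> x != y ->
  exists2 z, z \in r & (z != x) && (z != y).
Proof.
case: r => [|r0 [|r1 [|r2 [|? ?]]]] // _ hu.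
have [n01 n02 n12] := uniq3 hu.
rewrite !inE => /or3P [] /eqP -> /or3P [] /eqP ->; rewrite ?eqxx // => _.
- by exists r2; rewrite ?inE ?eqxx ?orbT // eq_sym n02 eq_sym n12.
- by exists r1; rewrite ?inE ?eqxx ?orbT // eq_sym n01 n12.
- by exists r2; rewrite ?inE ?eqxx ?orbT // eq_sym n12 eq_sym n02.
- by exists r0; rewrite ?inE ?eqxx ?orbT // n01 n02.
- by exists r1; rewrite ?inE ?eqxx ?orbT // n12 eq_sym n01.
- by exists r0; rewrite ?inE ?eqxx ?orbT // n02 n01.
Qed.

Lemma tri_pick (r : seq T) x : size r = 3 -> uniq r -> x \in r ->
  exists y z, uniq [:: x; y; z] /\ r =i [:: x; y; z].
Proof.
case: r => [|r0 [|r1 [|r2 [|? ?]]]] // _ hu.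
have [n01 n02 n12] := uniq3 hu.
rewrite !inE => /or3P [] /eqP ->.
- by exists r1, r2.
- exists r2, r0; split; first by rewrite /= !inE negb_or n12 eq_sym n01 eq_sym n02.
  by move=> t; rewrite !inE; case: (t == r0); case: (t == r1); case: (t == r2).
- exists r0, r1; split; first by rewrite /= !inE negb_or eq_sym n02 eq_sym n12 n01.
  by move=> t; rewrite !inE; case: (t == r0); case: (t == r1); case: (t == r2).
Qed.

Lemma in_set2_eq (u w x y : T) : [set u; w] = [set x; y] -> (w == x) || (w == y).
Proof. move=> E; have : w \in [set x; y] by rewrite -E set22. by rewrite !inE. Qed.


Lemma final (p q : seq T) : (forall x y, connect adj x y) ->
  (forall v, exists2 f, f \in E0 & NoDF f v) ->
  3 <= size p -> uniq p -> cycle adj p -> 3 <= size q -> uniq q -> cycle adj q ->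
  cycle_edges p != cycle_edges q ->
  #|T| = 6 /\
  exists a1 a2 a3 b1 b2 b3 : T,
    uniq [:: a1; a2; a3; b1; b2; b3] /\
    edges adj = [set [set a1; a2]; [set a2; a3]; [set a1; a3];
                     [set b1; b2]; [set b2; b3]; [set b1; b3];
                     [set a1; b1]].
Proof.
move=> Hc NDF hsp hup hcp hsq huq hcq ne.
have [a [b [hp3 ha hb hab up]]] := TriP Hc NDF hsp hup hcp hsq huq hcq ne.
have ne' : cycle_edges q != cycle_edges p by rewrite eq_sym.
have [c [d [hq3 hcq' hdq hcd uq]]] := TriP Hc NDF hsq huq hcq hsp hup hcp ne'.
have disj : forall z, z \in p -> z \in q -> False.
  move=> z hzp hzq.
  have [y hyq hyp] : exists2 y, y \in q & y \notin p.
    apply: NNPP => H; move/eqP: ne; apply.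
    apply: (two_tri hup hp3 (fun t h => h) _ hup hsp huq hsq) => t ht.
    by apply: NNPP => ht'; apply: H; exists t => //; apply/negP.
  have nzy : z != y by apply: contraNneq hyp => <-.
  have e1 := up z y hzp hyp (tadj hq3 huq hcq hzq hyq nzy).
  have [y' hy'q /andP [n1 n2]] := third hq3 huq hzq hyq nzy.
  case: (boolP (y' \in p)) => hy'p.
    have e2 := up y' y hy'p hyp (tadj hq3 huq hcq hy'q hyq n2).
    rewrite -e1 in e2; case: (set2_eqP e2) => -[e3 e4].
      by rewrite e3 eqxx in n1.
    by rewrite e3 eqxx in n2.
  have e2 := up z y' hzp hy'p (tadj hq3 huq hcq hzq hy'q ltac:(by rewrite eq_sym)).
  rewrite -e1 in e2; case: (set2_eqP e2) => -[e3 e4].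
    by rewrite e4 eqxx in n2.
  by rewrite e3 eqxx in nzy.
have haq : a \notin q by apply/negP => h; exact: disj a ha h.
have hbq : b \in q.
  apply: NNPP => /negP hbq.
  have [f hf hn] := NDF b.
  have Kc : forall r, 3 <= size r -> uniq r -> cycle (R f) r ->
      (exists2 x, x \in r & connect (R f) b x) -> b \in r.
    move=> r hs hu hc hx; have [_ hin] := K hn hs hu hc hx; exact: hin _ (connect0 _ _).
  case: (boolP (f \in cycle_edges p)) => hfp.
    have hfq : f \notin cycle_edges q.
      apply/negP => hfq; case/cedgeP: (hfp) => z hz ez; apply: (disj z hz).
      by apply: (cedge_mem hfq); rewrite ez set21.
    move/negP: hbq; apply; apply: Kc hsq huq (cyc_sub huq hcq hfq) _.
    by exists c => //; exact: (conn_Rf hsp hup hcp hfp Hc b c).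
  case: (eqVneq f [set a; b]) => efab.
    have hfq : f \notin cycle_edges q.
      apply/negP => hfq; move/negP: haq; apply; apply: (cedge_mem hfq).
      by rewrite efab set21.
    move/negP: hbq; apply; apply: Kc hsq huq (cyc_sub huq hcq hfq) _.
    exists c => //; apply: NNPP => hnc.
    pose A := [pred y | connect (R f) b y || (y \in p)].
    have hA1 : A b by rewrite /A /= connect0.
    have hA2 : ~~ A c.
      rewrite /A /= negb_or; apply/andP; split; first exact/negP.
      by apply/negP => h; exact: disj c h hcq'.
    have [u [w [hu hw huw]]] := exit (A := A) (Hc b c) hA1 hA2.
    have hwab : w \in [set a; b] -> False.
      by move=> /set2P [] ew; move/negP: hw; apply; rewrite /A /= ew ?ha ?orbT ?connect0.
    move: hu; rewrite /A /= => /orP [hbu|hup'].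
      case: (eqVneq [set u; w] f) => e.
        by apply: hwab; rewrite -efab -e set22.
      move/negP: hw; apply; rewrite /A /=; apply/orP; left.
      by apply: connect_trans hbu (connect1 _); rewrite R_E huw e.
    have hwp : w \notin p by move: hw; rewrite /A /= negb_or => /andP [_].
    by apply: hwab; rewrite -(up u w hup' hwp huw) set22.
  move/negP: hb; apply; apply: Kc hsp hup (cyc_sub hup hcp hfp) _.
  by exists a => //; apply: connect1; rewrite R_E Hsym hab setUC eq_sym efab.
have hbaq := uq b a hbq haq ltac:(by rewrite Hsym).
have hall : forall y, (y \in p) || (y \in q).
  move=> y; apply: NNPP => /negP hy.
  have [u [w [hu hw huw]]] := exit (A := [pred z | (z \in p) || (z \in q)]) (Hc a y) ltac:(by rewrite /= ha) hy.
  have hwab : w \in [set a; b] -> False.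
    by move=> /set2P [] ew; move: hw; rewrite /= ew ?ha ?hbq ?orbT.
  move: hw; rewrite /= negb_or => /andP [hwp hwq].
  move: hu => /= /orP [hup'|huq'].
    by apply: hwab; rewrite -(up u w hup' hwp huw) set22.
  by apply: hwab; rewrite setUC hbaq -(uq u w huq' hwq huw) set22.
have [a2 [a3 [ua hpm]]] := tri_pick hp3 hup ha.
have [b2 [b3 [ub hqm]]] := tri_pick hq3 huq hbq.
have [na12 na13 na23] := uniq3 ua.
have [nb12 nb13 nb23] := uniq3 ub.
have dis' : forall x y, x \in [:: a; a2; a3] -> y \in [:: b; b2; b3] -> x != y.
  move=> x y hx hy; apply/eqP => exy; subst y; apply: (disj x); by rewrite ?hpm ?hqm.
have ul : uniq [:: a; a2; a3; b; b2; b3].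
  have -> : [:: a; a2; a3; b; b2; b3] = [:: a; a2; a3] ++ [:: b; b2; b3] by [].
  rewrite cat_uniq ua ub andbT; apply/hasPn => y hy; apply/negP => hy'.
  by have := dis' y y hy' hy; rewrite eqxx.
split.
  have h6 : #|[:: a; a2; a3; b; b2; b3]| = 6 by apply/card_uniqP.
  rewrite -h6; apply: eq_card => x.
  have := hall x; rewrite hpm hqm !inE.
  by case/orP => /or3P [] /eqP ->; rewrite ?eqxx ?orbT.
exists a, a2, a3, b, b2, b3; split => //.
have tp : forall x y, x \in [:: a; a2; a3] -> y \in [:: a; a2; a3] -> x != y -> adj x y.
  by move=> x y hx hy; apply: (tadj hp3 hup hcp); rewrite hpm.
have tq : forall x y, x \in [:: b; b2; b3] -> y \in [:: b; b2; b3] -> x != y -> adj x y.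
  by move=> x y hx hy; apply: (tadj hq3 huq hcq); rewrite hqm.
apply/eqP; rewrite eqEsubset; apply/andP; split; last first.
  rewrite !subUset !sub1set !memE0 hab andbT.
  have t1 : adj a a2 by apply: tp; rewrite ?inE ?eqxx ?orbT.
  have t2 : adj a2 a3 by apply: tp; rewrite ?inE ?eqxx ?orbT.
  have t3 : adj a a3 by apply: tp; rewrite ?inE ?eqxx ?orbT.
  have s1 : adj b b2 by apply: tq; rewrite ?inE ?eqxx ?orbT.
  have s2 : adj b2 b3 by apply: tq; rewrite ?inE ?eqxx ?orbT.
  have s3 : adj b b3 by apply: tq; rewrite ?inE ?eqxx ?orbT.
  by rewrite t1 t2 t3 s1 s2 s3.
apply/subsetP => e; rewrite /edges inE => /existsP [x /existsP [y /andP [hxy /eqP ->]]].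
have nxy := adj_neq hxy.
case/orP: (hall x) => hx; case/orP: (hall y) => hy.
- move: hx hy nxy; rewrite !hpm !inE => /or3P [] /eqP -> /or3P [] /eqP ->; rewrite ?eqxx // => _;
  by rewrite ?inE ?eqxx ?orbT // setUC ?eqxx ?orbT.
- have hyp : y \notin p by apply/negP => h; exact: disj y h hy.
  by rewrite (up x y hx hyp hxy) !inE eqxx ?orbT.
- have hyq : y \notin q by apply/negP => h; exact: disj y hy h.
  by rewrite (uq x y hx hyq hxy) -hbaq setUC !inE eqxx ?orbT.
- move: hx hy nxy; rewrite !hqm !inE => /or3P [] /eqP -> /or3P [] /eqP ->; rewrite ?eqxx // => _;
  by rewrite ?inE ?eqxx ?orbT // setUC ?eqxx ?orbT.
Qed.

End Graph.

Theorem mainTheorem7 (T : finType) (adj : rel T) :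
  simple_graph adj -> connected_graph adj -> two_distinct_cycles adj ->
  cat_number adj = 3 ->
  #|T| = 6 /\
  exists a1 a2 a3 b1 b2 b3 : T,
    uniq [:: a1; a2; a3; b1; b2; b3] /\
    edges adj = [set [set a1; a2]; [set a2; a3]; [set a1; a3];
                     [set b1; b2]; [set b2; b3]; [set b1; b3];
                     [set a1; b1]].
Proof.
move=> [Hsym Hirr] [_ Hc] [p [q [[hsp hup hcp] [hsq huq hcq] ne]]] hcat.
apply: (final Hsym Hirr Hc _ hsp hup hcp hsq huq hcq ne) => v.
have hle : cat_at adj v <= 3.
  by rewrite -hcat /cat_number; exact: (@leq_bigmax_cond _ xpredT (cat_at adj) v).
have hE : forall x y, eadj (edges adj) x y = adj x y by move=> x y; exact: memE0.
have [w hw nwv] : exists2 w, w \in p & w != v.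
  case: p hsp hup {hcp ne} => [|x0 [|x1 ?]] // _ hu.
  case: (eqVneq x0 v) => e; last by exists x0; rewrite ?inE ?eqxx.
  exists x1; rewrite ?inE ?eqxx ?orbT //; rewrite -e.
  by move: hu; rewrite /= !inE negb_or eq_sym => /andP [/andP [] ].
have hdeg : deg (edges adj) v != 0.
  apply: (move_deg (w := w)) nwv.
  by rewrite (eq_connect hE).
have [f hf H] := catval_le (k := 2) hdeg hle.
exists f => // w' nwv' hcw hdf.
have h3 := DF_ge hdf.
have h2 := H w'; rewrite /cat_move hcw nwv' in h2.
by have := leq_trans h3 (h2 isT).
Qed.
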